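(* Let $S$ be a species tree, let $(T,\sigma)$ be a gene tree that is binary (every inner vertex of $T$ other than the planted root $0_T$ has exactly two children), and let $\mu:V(T)\to V(S)\cup E(S)$ be a reconciliation map without horizontal gene transfer satisfying axioms (R0), (R1), (R2), (R3.i), (R3.ii) (but not necessarily (R4)). Let $x,y\in L(T)$ be two genes with $\sigma(x)\neq\sigma(y)$. If $\operatorname{lca}_S(\sigma(x),\sigma(y))\prec_S \mu(\operatorname{lca}_T(x,y))$, then $\operatorname{lca}_T(x,y)$ is a duplication event, i.e., $\mu(\operatorname{lca}_T(x,y))\in E(S)$.
   Context: A planted phylogenetic tree $T$ has a distinguished leaf $0_T$ (the planted root) whose unique neighbour $\rho_T$ is the root; every other non-leaf vertex has at least two children. $L(T)$ denotes the leaves other than $0_T$. For vertices, $a\preceq_T b$ means $b$ lies on the path from $a$ to $0_T$; $\operatorname{lca}_T(A)$ is the $\preceq_T$-minimal vertex that is $\succeq_T$ every element of $A$; $T(v)$ is the subtree rooted at $v$ and $\mathsf{child}(v)$ the set of children of $v$. A species tree $S$ is a planted phylogenetic tree with planted root $0_S$, root $\rho_S$ and leaf set $\mathscr{S}$ (the species); $V^0(S)$ denotes the inner vertices of $S$ (vertices that are neither leaves nor $0_S$). The order $\preceq_S$ is extended to $V(S)\cup E(S)$ by regarding each edge $e=pq$ ($q$ a child of $p$) as lying strictly between $q$ and $p$: $q\prec_S e\prec_S p$, a vertex $w$ satisfies $w\prec_S e$ iff $w\preceq_S q$ and $e\prec_S w$ iff $p\preceq_S w$, and for edges $e=pq$,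 $e'=p'q'$, $e\prec_S e'$ iff $p\preceq_S q'$; $\operatorname{lca}_S$ of elements of $V(S)\cup E(S)$ is the $\preceq_S$-minimal vertex above all of them. A gene tree $(T,\sigma)$ is a planted phylogenetic tree $T$ with a map $\sigma:L(T)\to\mathscr{S}$ assigning to each gene its species. A reconciliation map without horizontal gene transfer is a map $\mu:V(T)\to V(S)\cup E(S)$ satisfying: (R0) $\mu(v)=0_S$ iff $v=0_T$; (R1) $\mu(v)=\sigma(v)$ for $v\in L(T)$; (R2) $v\prec_T w$ implies $\mu(v)\preceq_S\mu(w)$; and for every $v\in V(T)$ with $\mu(v)\in V^0(S)$: (R3.i) $\mu(v)=\operatorname{lca}_S(\mu(v'),\mu(v''))$ for at least two distinct children $v',v''$ of $v$, and (R3.ii) $\mu(v')$ and $\mu(v'')$ are $\preceq_S$-incomparable for any two distinct children $v',v''$ of $v$. A vertex $v$ of $T$ is a speciation if $\mu(v)\in V^0(S)$ and a duplication if $\mu(v)\in E(S)$. *)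

(* Defs.v *)
From mathcomp Require Import all_boot.
Set Implicit Arguments. Unset Strict Implicit. Unset Printing Implicit Defensive.

(* A planted tree on a finite vertex type V is given by its planted root v0
   and a parent map par (par v0 = v0). *)
Section Trees.
Variables (V : finType) (v0 : V) (par : V -> V).

Definition child (v c : V) : bool := (par c == v) && (c != v0).
Definition children (v : V) : {set V} := [set c | child v c].
Definition leaf (v : V) : bool := (v != v0) && (children v == set0).
Definition inner (v : V) : bool := (v != v0) && ~~ leaf v.

(* a ⪯ b : b lies on the path from a to v0 *)
Definition anc (a b : V) : Prop := exists n, iter n par a = b.
Definition sanc (a b : V) : Prop := anc a b /\ a <> b.

Definition planted_phylo : Prop :=
  [/\ par v0 = v0,
      (forall v, anc v v0),
      #|children v0| = 1 &
      (forall v, v != v0 -> #|children v| != 1)].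

Definition binary_tree : Prop :=
  forall v, v != v0 -> (#|children v| == 0) || (#|children v| == 2).

Definition is_lca (a b w : V) : Prop :=
  anc a w /\ anc b w /\ forall w', anc a w' -> anc b w' -> anc w w'.

(* Elements of V(S) ∪ E(S): a vertex, or an edge (par q, q) represented by
   its lower endpoint q <> v0. *)
Definition elem := (V + {q : V | q != v0})%type.

Definition elt (a b : elem) : Prop :=
  match a, b with
  | inl w, inl v => sanc w v
  | inl w, inr e => anc w (val e)
  | inr e, inl w => anc (par (val e)) w
  | inr e, inr e' => anc (par (val e)) (val e')
  end.
Definition ele (a b : elem) : Prop := a = b \/ elt a b.
Definition incomparable (a b : elem) : Prop := ~ ele a b /\ ~ ele b a.

Definition is_elca (a b : elem) (w : V) : Prop :=
  ele a (inl w) /\ ele b (inl w) /\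
  forall w', ele a (inl w') -> ele b (inl w') -> anc w w'.

End Trees.

Definition reconciliation (VT VS : finType) (t0 : VT) (parT : VT -> VT)
    (s0 : VS) (parS : VS -> VS) (sigma : VT -> VS)
    (mu : VT -> elem s0) : Prop :=
  [/\ (forall v, mu v = inl s0 <-> v = t0),
      (forall v, leaf t0 parT v -> mu v = inl (sigma v)),
      (forall v w, sanc parT v w -> ele parS (mu v) (mu w)) &
      (forall v w, mu v = inl w -> inner s0 parS w ->
         (exists v' v'', [/\ child t0 parT v v', child t0 parT v v'', v' <> v''
                            & is_elca parS (mu v') (mu v'') w]) /\
         (forall v' v'', child t0 parT v v' -> child t0 parT v v'' -> v' <> v'' ->
            incomparable parS (mu v') (mu v'')))].

(* Main.v *)
Require Import Defs.
From mathcomp Require Import all_boot.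
Set Implicit Arguments. Unset Strict Implicit.
Lemma iter_fix (V : finType) (v0 : V) (par : V -> V) n :
  par v0 = v0 -> iter n par v0 = v0.
Proof. move=> h; elim: n => //= n ->; exact h. Qed.

Lemma anc_refl (V : finType) (par : V -> V) a : anc par a a.
Proof. by exists 0. Qed.

Lemma anc_trans (V : finType) (par : V -> V) a b c :
  anc par a b -> anc par b c -> anc par a c.
Proof. move=> [n <-] [m <-]; exists (m + n); by rewrite iterD. Qed.

Lemma anc_par (V : finType) (par : V -> V) a : anc par a (par a).
Proof. by exists 1. Qed.

Lemma anc_step (V : finType) (par : V -> V) a b :
  anc par a b -> a <> b -> anc par (par a) b.
Proof. move=> [[|n] <-] // _; exists n; by rewrite iterSr. Qed.

Lemma anc_chain (V : finType) (par : V -> V) s a b :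
  anc par s a -> anc par s b -> anc par a b \/ anc par b a.
Proof.
move=> [n <-] [m <-]; case: (leqP n m) => h.
- left; exists (m - n); by rewrite -iterD subnK.
- right; exists (n - m); rewrite -iterD subnK //; exact: ltnW.
Qed.

Lemma iter_mul (V : finType) (par : V -> V) a p k :
  iter p par a = a -> iter (k * p) par a = a.
Proof. move=> h; elim: k => // k IH; by rewrite mulSn iterD IH h. Qed.

Lemma anc_antisym (V : finType) (v0 : V) (par : V -> V) a b :
  par v0 = v0 -> (forall v, anc par v v0) ->
  anc par a b -> anc par b a -> a = b.
Proof.
move=> h0 hr [n hn] [m hm].
have hc : iter (m + n) par a = a by rewrite iterD hn hm.
have [N hN] := hr a.
have : iter (N * (m + n)) par a = a by exact: iter_mul.
case: (posnP (m + n)) => hp.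
  move/eqP: hp; rewrite addn_eq0 => /andP[/eqP hm0 /eqP hn0].
  by move: hn; rewrite hn0.
have hle : N <= N * (m + n) by rewrite leq_pmulr.
rewrite -(subnK hle) iterD hN iter_fix // => ha.
move: hn; rewrite -ha iter_fix //.
Qed.

Lemma anc_below (V : finType) (v0 : V) (par : V -> V) a b :
  par v0 = v0 -> anc par a b -> a <> b -> b <> v0 ->
  exists c, [/\ par c = b, c <> v0 & anc par a c].
Proof.
move=> h0 [[|n] <-] // _ hb; exists (iter n par a); split => //.
- move=> e; apply: hb; by rewrite /= e.
- by exists n.
Qed.

Lemma ele_vv (V : finType) (v0 : V) (par : V -> V) p q :
  @ele V v0 par (inl p) (inl q) <-> anc par p q.
Proof.
split.
- by case=> [[->]|[]]; [exact: anc_refl|].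
- move=> h; case: (eqVneq p q) => [->|ne]; [by left|right; split=> //; exact/eqP].
Qed.

Lemma ele_trans_v (V : finType) (v0 : V) (par : V -> V) (a b : elem v0) w :
  ele par a (inl w) -> ele par (inl w) b -> ele par a b.
Proof.
case: a => [p|p]; case: b => [q|q] /=.
- move=> /ele_vv h1 /ele_vv h2; apply/ele_vv; exact: anc_trans h1 h2.
- move=> /ele_vv h1 [//|h2]; right; exact: anc_trans h1 h2.
- case=> [//|h1] /ele_vv h2; right; exact: anc_trans h1 h2.
- case=> [//|h1] [//|h2]; right; exact: anc_trans h1 h2.
Qed.

Lemma ele_chain (V : finType) (v0 : V) (par : V -> V) (a b : elem v0) s :
  ele par (inl s) a -> ele par (inl s) b -> ele par a b \/ ele par b a.
Proof.
have gen : forall x : elem v0, ele par (inl s) x -> anc par s (match x with inl p => p | inr p => val p end).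
  case=> [p /ele_vv //|p [//|h]] //.
have key : forall (p : V) (q : {q : V | q != v0}), anc par p (val q) \/ anc par (val q) p ->
    @ele V v0 par (inl p) (inr q) \/ ele par (inr q) (inl p).
  move=> p q [h|h]; first by left; right.
  case: (eqVneq (val q) p) => [e|ne]; first by left; right => /=; rewrite e; exact: anc_refl.
  right; right; apply: anc_step h _; exact/eqP.
move=> /gen ha /gen hb; have := anc_chain ha hb.
case: a {ha} => [p|p]; case: b {hb} => [q|q] /= hc.
- by case: hc => h; [left|right]; apply/ele_vv.
- exact: key.
- have := key q p (proj1 (or_comm _ _) hc) => [[]] ; by [right|left].
- case: (eqVneq p q) => [->|ne]; first by left; left.
  case: hc => h; [left|right]; right; apply: anc_step h _ => e; move: ne;
    [by rewrite (val_inj e) eqxx | by rewrite (val_inj e) eqxx].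
Qed.

Lemma elca_sym (V : finType) (v0 : V) (par : V -> V) (a b : elem v0) w :
  is_elca par a b w -> is_elca par b a w.
Proof. move=> [h1 [h2 h3]]; split=> //; split=> // w' p q; exact: h3. Qed.

Lemma leaf_top (V : finType) (v0 : V) (par : V -> V) a b :
  par v0 = v0 -> leaf v0 par a -> anc par b a -> b = a.
Proof.
move=> h0 /andP[ha /eqP hc] hba; case: (eqVneq b a) => // ne.
have [c [hc1 hc2 _]] := anc_below h0 hba (elimN eqP ne) (elimN eqP ha).
have : c \in children v0 par a by rewrite inE /child hc1 eqxx; exact/eqP.
by rewrite hc inE.
Qed.

Theorem lemma2 (VS : finType) (s0 : VS) (parS : VS -> VS)
    (VT : finType) (t0 : VT) (parT : VT -> VT)
    (sigma : VT -> VS) (mu : VT -> elem s0) :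
  planted_phylo s0 parS ->
  planted_phylo t0 parT ->
  binary_tree t0 parT ->
  (forall v, leaf t0 parT v -> leaf s0 parS (sigma v)) ->
  reconciliation t0 parT parS sigma mu ->
  forall (x y : VT) (u : VT) (w : VS),
    leaf t0 parT x -> leaf t0 parT y -> sigma x <> sigma y ->
    is_lca parT x y u ->
    is_lca parS (sigma x) (sigma y) w ->
    elt parS (inl w) (mu u) ->
    exists e, mu u = inr e.
Proof.
move=> [hS0 hSr hS1 hSn] [hT0 hTr hT1 hTn] hbin _ [R0 R1 R2 R3]
  x y u w hx hy hsxy [hxu [hyu hu]] [hxw [hyw hw]] hlt.
case hmu: (mu u) => [v|e]; last by exists e.
exfalso; rewrite hmu /= in hlt; case: hlt => hwv hne.
have hxt : x != t0 by case/andP: hx.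
have hyt : y != t0 by case/andP: hy.
have : #|children t0 parT t0| == 1 by rewrite hT1.
case/cards1P => rho hrho.
have hrho_in : rho \in children t0 parT t0 by rewrite hrho set11.
move: (hrho_in); rewrite inE => /andP[/eqP hrp hrt].
have below : forall a, a != t0 -> anc parT a rho.
  move=> a ha; have [n hn] := hTr a; elim: n a ha hn => [|n IH] a ha hn.
    by move: ha; rewrite -hn /= eqxx.
  rewrite iterSr in hn; case: (eqVneq (parT a) t0) => hpa.
    have : a \in children t0 parT t0 by rewrite inE /child hpa eqxx ha.
    rewrite hrho inE => /eqP ->; exact: anc_refl.
  exact: anc_trans (anc_par _ a) (IH _ hpa hn).
have hut : u <> t0.
  move=> eu; have [k hk] := hu rho (below _ hxt) (below _ hyt).
  by move: hrt; rewrite -hk eu iter_fix // eqxx.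
have hvs : v <> s0 by move=> ev; apply: hut; apply/R0; rewrite hmu ev.
have hinner : inner s0 parS v.
  have [c [hc1 hc2 _]] := anc_below hS0 hwv hne hvs.
  apply/andP; split; first exact/eqP.
  rewrite /leaf negb_and; apply/orP; right; apply/set0Pn; exists c.
  by rewrite inE /child hc1 eqxx; exact/eqP.
have [_ hinc] := R3 u v hmu hinner.
have [[v' [v'' [cv' cv'' ne' helca]]] _] := R3 u v hmu hinner.
have hxy : x <> y by move=> e; apply: hsxy; rewrite e.
have hxu' : x <> u by move=> e; apply: hxy; symmetry; apply: (leaf_top hT0 hx); rewrite e; exact: hyu.
have hyu' : y <> u by move=> e; apply: hxy; apply: (leaf_top hT0 hy); rewrite e; exact: hxu.
have [c1 [pc1 c1t hxc1]] := anc_below hT0 hxu hxu' hut.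
have [c2 [pc2 c2t hyc2]] := anc_below hT0 hyu hyu' hut.
have cc1 : child t0 parT u c1 by rewrite /child pc1 eqxx; exact/eqP.
have cc2 : child t0 parT u c2 by rewrite /child pc2 eqxx; exact/eqP.
have hc12 : c1 != c2.
  apply/eqP => e; rewrite -e in hyc2.
  have e2 : u = c1 by apply: (anc_antisym hT0 hTr (hu _ hxc1 hyc2)); rewrite -pc1; exact: anc_par.
  have pu : parT u = u by rewrite {1}e2 pc1.
  have [n hn] := hTr u; by apply: hut; rewrite -hn iter_fix.
have helca12 : is_elca parS (mu c1) (mu c2) v.
  have := hbin u (introN eqP hut).
  have hnz : #|children t0 parT u| != 0.
    have hc1in : c1 \in children t0 parT u by rewrite inE.
    by apply/eqP => /cards0_eq h; rewrite h inE in hc1in.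
  rewrite (negbTE hnz) /= => /cards2P [a [b [nab hab]]].
  have : c1 \in children t0 parT u by rewrite inE.
  have : c2 \in children t0 parT u by rewrite inE.
  have : v' \in children t0 parT u by rewrite inE.
  have : v'' \in children t0 parT u by rewrite inE.
  rewrite hab => /set2P h1 /set2P h2 /set2P h3 /set2P h4.
  suff : (c1 = v' /\ c2 = v'') \/ (c1 = v'' /\ c2 = v').
    by case=> [[-> ->]|[-> ->]] //; exact: elca_sym.
  move: hc12 ne'; case: h1 => ->; case: h2 => ->; case: h3 => ->; case: h4 => ->;
  move=> hh1 hh2; (by left) || (by right) || (by move: hh1; rewrite eqxx) || (by exfalso; apply: hh2).
have hinc12 := hinc c1 c2 cc1 cc2 (elimN eqP hc12).
have hx1 : ele parS (inl (sigma x)) (mu c1).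
  rewrite -(R1 x hx); case: (eqVneq x c1) => [->|nx]; first by left.
  apply: R2; split => //; exact/eqP.
have hy2 : ele parS (inl (sigma y)) (mu c2).
  rewrite -(R1 y hy); case: (eqVneq y c2) => [->|ny]; first by left.
  apply: R2; split => //; exact/eqP.
have [hA|hA] := ele_chain hx1 (proj2 (ele_vv _ _ _ _) hxw);
have [hB|hB] := ele_chain hy2 (proj2 (ele_vv _ _ _ _) hyw).
- case: helca12 => _ [_ h3]; apply: hne; apply: anc_antisym hS0 hSr hwv _; exact: h3.
- by case: hinc12 => h _; apply: h; exact: ele_trans_v hA hB.
- by case: hinc12 => _ h; apply: h; exact: ele_trans_v hB hA.
- by case: (ele_chain hA hB) => h; case: hinc12.
Qed.
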